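(* Among all spiro hexagonal chains with $n$ hexagons, $n\ge4$: (i) the unique spiro hexagonal chain with the maximum Wiener index is the spiro para-chain $P_n$; (ii) the unique spiro hexagonal chain with the second maximal Wiener index is the spiro hexagonal chain with cut-vertex sequence $(c_2,\dots,c_{n-1})=(p_1,\dots,p_{n-3},m_{n-2})$; (iii) the unique spiro hexagonal chain with the third maximal Wiener index is the spiro hexagonal chain with cut-vertex sequence $(c_2,\dots,c_{n-1})=(p_1,\dots,p_{n-4},m_{n-3},p_{n-2})$.
   Context: The Wiener index is $W(G)=\sum_{\{u,v\}\subseteq V(G)}d_G(u,v)$, $d_G$ the shortest-path distance. A spiro hexagonal chain of length $n$, $G_n=H_0H_1\cdots H_{n-1}$, is a connected graph in which every block is a hexagon (6-cycle) $H_0,\dots,H_{n-1}$, each hexagon has at most two cut-vertices, each cut-vertex is shared by exactly two hexagons, and for $k=1,\dots,n-1$ the hexagons $H_{k-1}$ and $H_k$ share the cut-vertex $c_k$. For $k\ge1$, a vertex of $H_k$ at distance $1$, $2$, $3$ from $c_k$ is called an ortho-, meta-, para-vertex of $H_k$, denoted $o_k,m_k,p_k$. For $2\le k\le n-1$, $c_k$ is one of $o_{k-1},m_{k-1},p_{k-1}$, and the sequence $(c_2,\dots,c_{n-1})$ (recording these types) is the cut-vertex sequence, which determines the chain up to isomorphism; chains are considered up to isomorphism. The spiro para-chain $P_n$ is the chain with $c_k=p_{k-1}$ for all $2\le k\le n-1$. *)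

(* Defs.v *)
From mathcomp Require Import all_boot.
Set Implicit Arguments. Unset Strict Implicit. Unset Printing Implicit Defensive.

Fixpoint reach (T : finType) (e : rel T) (k : nat) (u v : T) : bool :=
  match k with
  | 0 => u == v
  | k'.+1 => reach e k' u v || [exists w, reach e k' u w && e w v]
  end.

(* shortest-path distance: least k with a walk of length <= k
   (= #|T| if v is unreachable; never happens for connected graphs) *)
Definition gdist (T : finType) (e : rel T) (u v : T) : nat :=
  find (fun k => reach e k u v) (iota 0 #|T|).

Definition wiener (N : nat) (e : rel 'I_N) : nat :=
  \sum_(u : 'I_N) \sum_(v : 'I_N | (u < v)%N) gdist e u v.

Definition graph_iso (T : finType) (e1 e2 : rel T) : Prop :=
  exists f : T -> T, bijective f /\ forall u v, e1 u v = e2 (f u) (f v).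

(* type of the cut-vertex c_k in H_{k-1}: ortho / meta / para,
   i.e. at distance 1 / 2 / 3 from c_{k-1} in H_{k-1} *)
Inductive ctype := Ortho | Meta | Para.

Definition ctype_dist (t : ctype) : nat :=
  match t with Ortho => 1 | Meta => 2 | Para => 3 end.

(* Concrete model of the chain G_n = H_0 ... H_{n-1} with cut-vertex sequence
   s = (c_2, ..., c_{n-1}) (s`_i is the type of c_{i+2}).
   Vertices are 0 .. 5n.  H_0 is the cycle 0-1-2-3-4-5-0 and c_1 = 0.
   For k >= 1, H_k is the cycle c_k, 5k+1, 5k+2, 5k+3, 5k+4, 5k+5, c_k,
   and c_{k+1} = 5k + ctype_dist (type of c_{k+1}), i.e. the vertex of H_k
   at distance 1,2,3 from c_k. *)
Definition cutv (s : seq ctype) (k : nat) : nat :=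
  match k with
  | 0 | 1 => 0
  | k'.+1 => 5 * k' + ctype_dist (nth Para s k'.-1)
  end.

Definition hexpos (s : seq ctype) (k j : nat) : nat :=
  if k == 0 then j else if j == 0 then cutv s k else 5 * k + j.

Definition spiro_adj (n : nat) (s : seq ctype) : rel 'I_(5 * n + 1) :=
  fun u v => [exists k : 'I_n, exists j : 'I_6,
     ((hexpos s k j == u) && (hexpos s k ((j + 1) %% 6) == v))
  || ((hexpos s k j == v) && (hexpos s k ((j + 1) %% 6) == u))].

Arguments spiro_adj n s : clear implicits.

Definition spiro_wiener (n : nat) (s : seq ctype) : nat :=
  wiener (spiro_adj n s).

Definition para_seq (n : nat) : seq ctype := nseq (n - 2) Para.
Definition second_seq (n : nat) : seq ctype := rcons (nseq (n - 3) Para) Meta.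
Definition third_seq (n : nat) : seq ctype := nseq (n - 4) Para ++ [:: Meta; Para].

(* Main.v *)
Require Import Defs.
From mathcomp Require Import all_boot.
From mathcomp Require Import zify.
Set Implicit Arguments. Unset Strict Implicit. Unset Printing Implicit Defensive.

Definition absd (i j : nat) := (i - j) + (j - i).
Definition hd (i j : nat) := minn (absd i j) (6 - absd i j).
Definition home (v : nat) := if v == 0 then 0 else v.-1 %/ 5.
Definition pos (v : nat) := if v == 0 then 0 else v.-1 %% 5 + 1.
Definition Pk (s : seq ctype) (k : nat) :=
  if k is k'.+1 then ctype_dist (nth Para s k') else 0.
Fixpoint X (s : seq ctype) (k : nat) : nat :=
  if k is k'.+1 then X s k' + Pk s k'.+1 else 0.

Definition G (s : seq ctype) (a i k j : nat) : nat :=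
  if a < k then hd i (Pk s a) + (X s k.-1 - X s a) + hd 0 j
  else if a == k then hd i j
  else hd 0 i + (X s a.-1 - X s k) + hd j (Pk s k).

Definition fd (s : seq ctype) (u v : nat) := G s (home u) (pos u) (home v) (pos v).

Lemma ctd_bnd t : 1 <= ctype_dist t <= 3.
Proof. by case: t. Qed.

Lemma Pk_le3 s k : Pk s k <= 3.
Proof. case: k => //= k; by have := ctd_bnd (nth Para s k); lia. Qed.

Lemma Pk_ge1 s k : 0 < k -> 1 <= Pk s k.
Proof. case: k => //= k _; by have := ctd_bnd (nth Para s k); lia. Qed.

Lemma XS s k : X s k.+1 = X s k + Pk s k.+1.
Proof. by []. Qed.

Lemma X_mono s k l : k <= l -> X s k <= X s l.
Proof.
elim: l => [|l IH]; first by rewrite leqn0 => /eqP ->.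
rewrite leq_eqVlt => /orP [/eqP -> //|]; rewrite ltnS => /IH; rewrite XS; lia.
Qed.

Lemma X_bnd s k l : k <= l -> X s l <= X s k + 3 * (l - k).
Proof.
elim: l => [|l IH]; first by rewrite leqn0 => /eqP ->; lia.
rewrite leq_eqVlt => /orP [/eqP -> //|]; first lia.
rewrite ltnS => hkl; have := IH hkl; rewrite XS; have := Pk_le3 s l.+1; lia.
Qed.

Lemma hd_sym i j : hd i j = hd j i.
Proof. rewrite /hd /absd; lia. Qed.

Lemma hd_le3 i j : hd i j <= 3.
Proof. rewrite /hd /absd; lia. Qed.

Lemma hd_adj i j : j < 6 -> i < 6 ->
  hd i j <= hd i ((j + 1) %% 6) + 1 /\ hd i ((j + 1) %% 6) <= hd i j + 1.
Proof.
move=> hj hi; have -> : (j + 1) %% 6 = if j == 5 then 0 else j + 1.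
  by case: j hj => [|[|[|[|[|[|]]]]]].
rewrite /hd /absd; case: ifP => /eqP; lia.
Qed.

Lemma home_pos v : v = if home v == 0 then pos v else 5 * home v + pos v.
Proof. rewrite /home /pos; case: v => //= v; case: ifP => /eqP; lia. Qed.

Lemma pos_le5 v : pos v <= 5.
Proof. rewrite /pos; case: v => //= v; lia. Qed.

Lemma pos_ge1 v : 0 < home v -> 0 < pos v.
Proof. rewrite /home /pos; case: v => //= v; lia. Qed.

Lemma home_lt n v : v < 5 * n + 1 -> home v < n \/ n = 0.
Proof. rewrite /home; case: v => //= [|v]; lia. Qed.

Lemma hexpos_hp s k j : j < 6 -> (j != 0) || (k == 0) ->
  home (hexpos s k j) = k /\ pos (hexpos s k j) = j.
Proof.
rewrite /hexpos /home /pos => hj.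
case: (eqVneq k 0) => [->|hk] /=; first by case: j hj => //= j; lia.
rewrite orbF => hj0; rewrite (negbTE hj0).
case E: (5 * k + j) => [|w]; first lia.
simpl; lia.
Qed.

Lemma cutv_eq s k : cutv s k.+1 = 5 * k + Pk s k.
Proof. by case: k => // k; rewrite /cutv /= mulnC. Qed.

Lemma hd0p p : p <= 3 -> hd 0 p = p.
Proof. rewrite /hd /absd; lia. Qed.
Lemma hdpp p : hd p p = 0.
Proof. rewrite /hd /absd; lia. Qed.

Lemma Gshift s a i k : G s a i k (Pk s k) = G s a i k.+1 0.
Proof.
rewrite /G hdpp (hd_sym i 0) [hd 0 0]hd0p // addn0.
have h3 := Pk_le3 s k; have hX := XS s k.
case: (ltngtP a k) => h.
- rewrite ltnS ltnW //= hd0p //.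
  case: k h h3 hX => // k h h3 hX /=.
  have := X_mono s (k:=a) (l:=k) (ltac:(lia)); have := Pk_ge1 s (ltn0Sn k); lia.
- rewrite ltnS leqNgt h /=.
  case: (eqVneq a k.+1) => [->|ha]; first by rewrite subnn /= addn0.
  rewrite (hd0p (p:=ctype_dist (nth Para s k))); last by have := ctd_bnd (nth Para s k); lia.
  have h2 : k.+1 <= a.-1 by lia.
  have := X_mono s h2 => /=; have := ctd_bnd (nth Para s k); lia.
- subst a; by rewrite ltnS leqnn /= subnn !addn0.
Qed.

Lemma rep s u k j : j < 6 -> fd s u (hexpos s k j) = G s (home u) (pos u) k j.
Proof.
move=> hj; case: (boolP ((j != 0) || (k == 0))) => h.
  by rewrite /fd; case: (hexpos_hp s hj h) => -> ->.
move: h; rewrite negb_or negbK => /andP [/eqP -> hk0].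
case: k hk0 => // k _.
have -> : hexpos s k.+1 0 = hexpos s k (Pk s k).
  rewrite /hexpos /=; case: k => //= k; rewrite mulnC.
  by have := ctd_bnd (nth Para s k); case: (ctype_dist _) => //= [] [|[|[|]]].
rewrite /fd; case: (hexpos_hp s (j:=Pk s k) (k:=k)).
- by have := Pk_le3 s k; lia.
- by case: k => //= k; have := ctd_bnd (nth Para s k); case: (ctype_dist _).
by move=> -> ->; rewrite Gshift.
Qed.

Lemma hexposS s k : hexpos s k.+1 0 = hexpos s k (Pk s k).
Proof.
rewrite /hexpos /=; case: k => //= k; rewrite mulnC.
by have := ctd_bnd (nth Para s k); case: (ctype_dist _) => //= [] [|[|[|]]].
Qed.

Lemma hexpos_lt s n k j : k < n -> j < 6 -> hexpos s k j < 5 * n + 1.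
Proof.
rewrite /hexpos => hk hj; case: ifP => hk0; first lia.
case: ifP => _; last lia.
case: k hk hk0 => // k hk _; rewrite cutv_eq; have := Pk_le3 s k; lia.
Qed.

Lemma adjE n s (x y : 'I_(5 * n + 1)) : spiro_adj n s x y ->
  exists k j, k < n /\ j < 6 /\
   (((x : nat) = hexpos s k j /\ (y : nat) = hexpos s k ((j + 1) %% 6)) \/
    ((y : nat) = hexpos s k j /\ (x : nat) = hexpos s k ((j + 1) %% 6))).
Proof.
move=> /existsP [k /existsP [j /orP [/andP [/eqP h1 /eqP h2]|/andP [/eqP h1 /eqP h2]]]];
 exists k, j; (split; [exact: ltn_ord|split; [exact: ltn_ord|]]); by [left|right].
Qed.

Lemma adjI n s (x y : 'I_(5 * n + 1)) k j : k < n -> j < 6 ->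
   (((x : nat) = hexpos s k j /\ (y : nat) = hexpos s k ((j + 1) %% 6)) \/
    ((y : nat) = hexpos s k j /\ (x : nat) = hexpos s k ((j + 1) %% 6))) ->
  spiro_adj n s x y.
Proof.
move=> hk hj H; apply/existsP; exists (Ordinal hk); apply/existsP; exists (Ordinal hj).
by case: H => [[-> ->]|[-> ->]]; rewrite !eqxx ?orbT.
Qed.

Lemma G_lip s a i k j : j < 6 -> i < 6 ->
  G s a i k j <= G s a i k ((j + 1) %% 6) + 1 /\
  G s a i k ((j + 1) %% 6) <= G s a i k j + 1.
Proof.
move=> hj hi; rewrite /G.
have h1 := hd_adj hj hi.
have h2 := hd_adj hj (isT : 0 < 6).
have h3 := hd_adj hj (ltn_trans (leq_ltn_trans (Pk_le3 s k) (isT : 3 < 4)) (isT : 4 < 6)).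
rewrite !(hd_sym _ (Pk s k)).
case: ifP => _; first lia. case: ifP => _; lia.
Qed.

Lemma reach_lb n s (u v : 'I_(5 * n + 1)) k :
  reach (spiro_adj n s) k u v -> fd s u v <= k.
Proof.
elim: k v => [|k IH] v /=.
  move/eqP => ->; rewrite /fd /G ltnn eqxx hdpp //.
case/orP => [/IH hv|/existsP [w /andP [/IH hw /adjE [k' [j [hk [hj H]]]]]]].
  lia.
have hi : pos u < 6 by have := pos_le5 u; lia.
have := G_lip s (home u) k' hj hi.
case: H => [[e1 e2]|[e1 e2]]; move: hw; rewrite e1 e2 !rep //; try lia;
  apply: ltn_pmod.
Qed.

Lemma hex_step j t : j < 6 -> t < 6 -> 0 < hd j t -> exists j', j' < 6 /\
  hd j' t = (hd j t).-1 /\ ((j' = (j + 1) %% 6) \/ (j = (j' + 1) %% 6)).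
Proof.
move=> hj ht hpos.
exists (if hd ((j + 1) %% 6) t < hd j t then (j + 1) %% 6 else (j + 5) %% 6).
move: hpos.
case: j hj => [|[|[|[|[|[|//]]]]]] _; case: t ht => [|[|[|[|[|[|//]]]]]] _ //= _;
  (split; [done|split; [done|]]); by [left|right].
Qed.

Lemma move_in n s (u v : 'I_(5 * n + 1)) k jj t m : k < n -> jj < 6 -> t < 6 ->
  (v : nat) = hexpos s k jj -> 0 < hd jj t ->
  (forall j', j' < 6 -> hd j' t = (hd jj t).-1 -> fd s u (hexpos s k j') = m) ->
  exists w : 'I_(5 * n + 1), spiro_adj n s w v /\ fd s u w = m.
Proof.
move=> hk hj ht hv hp H.
have [j' [hj' [hd' hor]]] := hex_step hj ht hp.
exists (Ordinal (hexpos_lt s hk hj')); split; last by rewrite /= H.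
apply: (adjI (k := k) (j := if (j' == (jj + 1) %% 6) then jj else j')) => //.
  by case: ifP.
case: ifP => [/eqP e|/eqP ne]; [right|left]; rewrite /= hv; first by rewrite -e.
by case: hor => // ->.
Qed.

Lemma fd0 s (u v : nat) : fd s u v = 0 -> u = v.
Proof.
rewrite /fd /G => H.
rewrite (home_pos u) (home_pos v).
have := pos_le5 u; have := pos_le5 v.
have hu := @pos_ge1 u; have hv := @pos_ge1 v.
move: H; case: ltngtP => h.
- move=> /eqP; rewrite !addn_eq0 => /andP [_ /eqP].
  rewrite /hd /absd; have := hv (leq_ltn_trans (leq0n _) h); lia.
- move=> /eqP; rewrite !addn_eq0 => /andP [/andP [/eqP + _] _].
  rewrite /hd /absd; have := hu (leq_ltn_trans (leq0n _) h); lia.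
- rewrite h; rewrite /hd /absd; case: ifP; lia.
Qed.

Lemma hexpos_home s v : v = hexpos s (home v) (pos v).
Proof.
rewrite {1}(home_pos v) /hexpos; case: ifP => // h.
have := @pos_ge1 v; rewrite lt0n h => /(_ isT); rewrite lt0n => /negbTE ->.
by [].
Qed.

Lemma home_ltn n (u : 'I_(5 * n + 1)) : 0 < n -> home u < n.
Proof. by move=> n0; case: (home_lt (ltn_ord u)) => // n00; rewrite n00 in n0. Qed.

Lemma pred_step n s (u v : 'I_(5 * n + 1)) m : 0 < n -> fd s u v = m.+1 ->
  exists w : 'I_(5 * n + 1), spiro_adj n s w v /\ fd s u w = m.
Proof.
move=> n0 H.
have ha := home_ltn u n0; have hb := home_ltn v n0.
have hi : pos u < 6 by have := pos_le5 u; lia.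
have hq : pos v < 6 by have := pos_le5 v; lia.
have hv := hexpos_home s v.
have HG : G s (home u) (pos u) (home v) (pos v) = m.+1 by [].
move: H; rewrite {1}/fd {1}/G.
case: (ltngtP (home u) (home v)) => h H.
- apply: (move_in (t := 0) hb hq) => //.
    rewrite /hd /absd; have := pos_ge1 (leq_ltn_trans (leq0n _) h); lia.
  move=> j' hj' e; rewrite rep // /G h (hd_sym 0 j') e.
  have : 0 < hd (pos v) 0 by rewrite /hd /absd; have := pos_ge1 (leq_ltn_trans (leq0n _) h); lia.
  rewrite (hd_sym (pos v) 0); lia.
- case: (eqVneq (pos v) (Pk s (home v))) => [e|ne].
  + have hv' : (v : nat) = hexpos s (home v).+1 0 by rewrite hexposS -e.
    move: HG; rewrite e Gshift => HG.
    have hb1 : (home v).+1 < n by lia.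
    case: (eqVneq (home u) (home v).+1) => [e1|ne1].
    * move: HG; rewrite /G e1 ltnn eqxx => HG.
      apply: (move_in (t := pos u) hb1 (isT : 0 < 6) hi) => //.
        by rewrite hd_sym HG.
      move=> j' hj' e2; rewrite rep // /G e1 ltnn eqxx hd_sym e2 hd_sym HG //.
    * have h1 : (home v).+1 < home u by lia.
      have f1 : (home u < (home v).+1) = false by apply/negbTE; rewrite -leqNgt; lia.
      move: HG; rewrite /G f1 (negbTE ne1) => HG.
      have hp1 := Pk_ge1 s (ltn0Sn (home v)).
      have hp3 := Pk_le3 s (home v).+1.
      apply: (move_in (t := Pk s (home v).+1) hb1 (isT : 0 < 6)) => //.
      - lia.
      - by rewrite hd0p.
      move=> j' hj' e2; rewrite rep // /G f1 (negbTE ne1) e2.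
      move: HG; rewrite (hd0p (p := Pk s (home v).+1)) //; lia.
  + have hP := Pk_le3 s (home v).
    apply: (move_in (t := Pk s (home v)) hb hq) => //.
    - lia.
    - by rewrite /hd /absd; move: ne; rewrite /absd; lia.
    have f1 : (home u < home v) = false by apply/negbTE; rewrite -leqNgt; lia.
    move=> j' hj' e2; rewrite rep // /G f1 (gtn_eqF h) e2.
    have : 0 < hd (pos v) (Pk s (home v)) by rewrite /hd /absd; move: ne; lia.
    lia.
- apply: (move_in (t := pos u) hb hq) => //.
    move: H; rewrite hd_sym; lia.
  move=> j' hj' e2; rewrite rep // /G h ltnn eqxx hd_sym e2.
  move: H; rewrite hd_sym; lia.
Qed.

Lemma reach_ub n s (u : 'I_(5 * n + 1)) m : 0 < n -> forall v : 'I_(5 * n + 1),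
  fd s u v = m -> reach (spiro_adj n s) m u v.
Proof.
move=> n0; elim: m => [|m IH] v H /=.
  by apply/eqP; apply: val_inj; exact: fd0 H.
have [w [hw hfw]] := pred_step n0 H.
apply/orP; right; apply/existsP; exists w; by rewrite IH.
Qed.

Lemma fd_lt n s (u v : 'I_(5 * n + 1)) : 0 < n -> fd s u v < 5 * n + 1.
Proof.
move=> n0; have ha := home_ltn u n0; have hb := home_ltn v n0.
rewrite /fd /G.
have h1 := hd_le3 (pos u) (Pk s (home u)); have h2 := hd_le3 0 (pos v).
have h3 := hd_le3 (pos u) (pos v); have h4 := hd_le3 0 (pos u).
have h5 := hd_le3 (pos v) (Pk s (home v)).
case: (ltngtP (home u) (home v)) => h.
- have hh : home u <= (home v).-1 by lia.
  have := X_bnd s hh; lia.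
- have hh : home v <= (home u).-1 by lia.
  have := X_bnd s hh; lia.
- lia.
Qed.

Lemma find_first (p : pred nat) m N : m < N -> p m ->
  (forall k, k < m -> ~~ p k) -> find p (iota 0 N) = m.
Proof.
move=> hm pm hk.
suff : forall a, a <= m -> m < a + N -> (forall k, a <= k < m -> ~~ p k) ->
  find p (iota a N) = m - a by move=> /(_ 0 (leq0n _) hm) ->; [rewrite subn0 | move=> k /andP [_ /hk]].
elim: N {hm} => [|N IH] a ham hmN hk'; first lia.
rewrite /=; case: (eqVneq a m) => [e|ne]; first by rewrite e pm subnn.
have pa : p a = false by apply/negbTE/hk'; rewrite leqnn; lia.
rewrite pa IH //; try lia.
move=> k /andP [h1 h2]; apply: hk'; lia.
Qed.

Lemma gdist_fd n s (u v : 'I_(5 * n + 1)) : 0 < n ->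
  gdist (spiro_adj n s) u v = fd s u v.
Proof.
move=> n0; rewrite /gdist card_ord; apply: find_first.
- exact: fd_lt.
- exact: reach_ub.
- move=> k hk; apply/negP => /reach_lb; lia.
Qed.

Definition Vn s N := \sum_(0 <= v < N) \sum_(0 <= u < v) fd s u v.
Definition Tr s n := \sum_(0 <= u < 5 * n + 1) fd s u (hexpos s n 0).

Lemma Vn6 s : Vn s 6 = 27.
Proof. by rewrite /Vn unlock /= /fd /G /home /pos /=. Qed.

Lemma Tr1 s : Tr s 1 = 9.
Proof. by rewrite /Tr unlock /= /fd /G /home /pos /=. Qed.

Lemma VS s N : Vn s N.+1 = Vn s N + \sum_(0 <= u < N) fd s u N.
Proof. by rewrite /Vn big_nat_recr. Qed.

Lemma home_lt' n u : 0 < n -> u < 5 * n + 1 -> home u < n.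
Proof. by move=> n0 /home_lt [] // n00; rewrite n00 in n0. Qed.

Lemma hp_new s n j : 0 < n -> 0 < j < 6 -> 5 * n + j = hexpos s n j /\
  home (5 * n + j) = n /\ pos (5 * n + j) = j.
Proof.
move=> n0 hj.
have e : 5 * n + j = hexpos s n j by rewrite /hexpos gtn_eqF // gtn_eqF //; case/andP: hj.
rewrite {2 3}e; split => //; apply: hexpos_hp; first by case/andP: hj.
by case/andP: hj => h _; rewrite -lt0n h.
Qed.

Lemma cross s n u j : 0 < n -> 0 < j < 6 -> u < 5 * n + 1 ->
  fd s u (5 * n + j) = fd s u (hexpos s n 0) + hd 0 j.
Proof.
move=> n0 hj hu; have [e _] := hp_new s n0 hj.
rewrite e !rep //; last by case/andP: hj.
have ha := home_lt' n0 hu.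
by rewrite /G ha /= [hd 0 0]/hd /= addn0.
Qed.

Lemma inner s n i j : 0 < n -> 0 < i < 6 -> 0 < j < 6 ->
  fd s (5 * n + i) (5 * n + j) = hd i j.
Proof.
move=> n0 hi hj; have [_ [h1 p1]] := hp_new s n0 hi; have [_ [h2 p2]] := hp_new s n0 hj.
by rewrite /fd /G h1 p1 h2 p2 ltnn eqxx.
Qed.

Lemma oldc s n u : 0 < n -> u < 5 * n + 1 ->
  fd s u (hexpos s n (Pk s n)) = fd s u (hexpos s n 0) + Pk s n.
Proof.
move=> n0 hu; have ha := home_lt' n0 hu.
have hP := Pk_le3 s n.
rewrite !rep //; last lia.
by rewrite /G ha [hd 0 0]/hd /= addn0 hd0p.
Qed.

Lemma newc s n j : 0 < n -> 0 < j < 6 ->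
  fd s (5 * n + j) (hexpos s n (Pk s n)) = hd j (Pk s n).
Proof.
move=> n0 hj; have [_ [h1 p1]] := hp_new s n0 hj.
have hP := Pk_le3 s n.
rewrite rep; last lia.
by rewrite /G h1 p1 ltnn eqxx.
Qed.

Lemma col_sum s n r : 0 < n -> r < 5 ->
  \sum_(0 <= u < 5 * n + 1 + r) fd s u (5 * n + 1 + r) =
  Tr s n + (5 * n + 1) * hd 0 r.+1 + \sum_(0 <= i < r) hd i.+1 r.+1.
Proof.
move=> n0 hr.
rewrite (big_cat_nat _ (n := 5 * n + 1)) //; last lia.
have -> : 5 * n + 1 + r = 5 * n + r.+1 by lia.
rewrite (eq_big_nat _ _ (F2 := fun u => fd s u (hexpos s n 0) + hd 0 r.+1)); last first.
  move=> u /andP [_ hu]; apply: cross => //.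
rewrite big_split /= sum_nat_const_nat subn0 -/(Tr s n) -addnA.
rewrite addnA; congr (_ + _).
have -> : 5 * n + 1 = 0 + (5 * n + 1) by [].
rewrite big_addn.
have -> : 5 * n + r.+1 - (5 * n + 1) = r by lia.
apply: eq_big_nat => i /andP [_ hi].
have -> : i + (0 + (5 * n + 1)) = 5 * n + i.+1 by lia.
by rewrite inner //; lia.
Qed.

Lemma Vn_step s n : 0 < n ->
  Vn s (5 * n.+1 + 1) = Vn s (5 * n + 1) + 5 * Tr s n + 45 * n + 27.
Proof.
move=> n0.
have E : forall r, r < 5 -> Vn s (5 * n + 1 + r.+1) = Vn s (5 * n + 1 + r) +
  (Tr s n + (5 * n + 1) * hd 0 r.+1 + \sum_(0 <= i < r) hd i.+1 r.+1).
  by move=> r hr; rewrite addnS VS col_sum.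
have -> : 5 * n.+1 + 1 = 5 * n + 1 + 5 by lia.
rewrite E // E // E // E // E // addn0.
have -> : \sum_(0 <= i < 0) hd i.+1 1 = 0 by rewrite big_geq.
have -> : \sum_(0 <= i < 1) hd i.+1 2 = 1 by rewrite big_nat1.
have -> : \sum_(0 <= i < 2) hd i.+1 3 = 3 by rewrite !big_nat_recr //= big_geq.
have -> : \sum_(0 <= i < 3) hd i.+1 4 = 6 by rewrite !big_nat_recr //= big_geq.
have -> : \sum_(0 <= i < 4) hd i.+1 5 = 8 by rewrite !big_nat_recr //= big_geq.
have -> : hd 0 1 = 1 by []. have -> : hd 0 2 = 2 by []. have -> : hd 0 3 = 3 by [].
have -> : hd 0 4 = 2 by []. have -> : hd 0 5 = 1 by [].
lia.
Qed.

Lemma big_shift (F : nat -> nat) a k :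
  \sum_(a <= i < a + k) F i = \sum_(0 <= i < k) F (i + a).
Proof. by rewrite -{1}(add0n a) big_addn addKn. Qed.

Lemma Tr_step s n : 0 < n ->
  Tr s n.+1 = Tr s n + 5 * n * Pk s n + 9.
Proof.
move=> n0.
rewrite /Tr hexposS.
have -> : 5 * n.+1 + 1 = 5 * n + 1 + 5 by lia.
rewrite (big_cat_nat _ (n := 5 * n + 1)) //; last lia.
idtac.
rewrite (big_shift _ (5 * n + 1) 5) /=.
rewrite [X in _ + X](eq_big_nat _ _ (F2 := fun i => hd i.+1 (Pk s n))); last first.
  move=> i /andP [_ hi].
  have -> : i + (5 * n + 1) = 5 * n + i.+1 by lia.
  by rewrite newc //; lia.
rewrite (eq_big_nat _ _ (F2 := fun u => fd s u (hexpos s n 0) + Pk s n)); last first.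
  by move=> u /andP [_ hu]; apply: oldc.
rewrite big_split /= sum_nat_const_nat subn0 -/(Tr s n).
have h1 := Pk_ge1 s n0; have h3 := Pk_le3 s n.
move: (Pk s n) h1 h3 => p h1 h3.
rewrite !big_nat_recr //= big_geq // /hd /absd. lia.
Qed.

Definition Dc s i := ctype_dist (nth Para s i).
Definition Yc s n := \sum_(i < n.-1) i.+1 * Dc s i.
Definition Zc s n := \sum_(i < n - 2) i.+1 * (n - 2 - i) * Dc s i.
Definition Del s n := \sum_(i < n - 2) i.+1 * (n - 2 - i) * (3 - Dc s i).

Lemma Tr_Y s n : 0 < n -> Tr s n = 9 * n + 5 * Yc s n.
Proof.
case: n => // k _; elim: k => [|k IH]; first by rewrite Tr1 /Yc big_ord0.
rewrite Tr_step // IH /Yc /= big_ord_recr /=.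
rewrite /Dc.
lia.
Qed.

Lemma Zc_step s k : Zc s k.+2 = Zc s k.+1 + Yc s k.+1.
Proof.
rewrite /Zc /Yc /=; case: k => [|j]; first by rewrite !big_ord0.
have -> : j.+3 - 2 = j.+1 by lia. have -> : j.+2 - 2 = j by lia.
rewrite big_ord_recr /= [X in _ = _ + X]big_ord_recr /=.
rewrite addnA -big_split /=; congr (_ + _); last lia.
apply: eq_bigr => i _; have := ltn_ord i; lia.
Qed.

Lemma V_Z s s' n : 0 < n ->
  Vn s (5 * n + 1) + 25 * Zc s' n = Vn s' (5 * n + 1) + 25 * Zc s n.
Proof.
case: n => // k _; elim: k => [|k IH].
  by rewrite /= !Vn6 /Zc !big_ord0.
rewrite (Vn_step s (n:=k.+1)) // (Vn_step s' (n:=k.+1)) // !Zc_step !Tr_Y //.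
lia.
Qed.

Lemma wiener_V n s : 0 < n -> spiro_wiener n s = Vn s (5 * n + 1).
Proof.
move=> n0; rewrite /spiro_wiener /wiener.
transitivity (\sum_(u < 5 * n + 1) \sum_(v < 5 * n + 1)
                (if u < v then fd s u v else 0)).
  apply: eq_bigr => u _; rewrite big_mkcond; apply: eq_bigr => v _.
  by case: ifP => // _; rewrite gdist_fd.
rewrite exchange_big /Vn big_mkord; apply: eq_bigr => v _.
rewrite (@big_nat_widen nat 0 addn 0 v (5 * n + 1) xpredT (fun u => fd s u v)); last exact: ltnW (ltn_ord v).
rewrite big_mkord big_mkcond /=.
by rewrite [RHS]big_mkcond.
Qed.

Lemma Dc_para n i : Dc (para_seq n) i = 3.
Proof. by rewrite /Dc /para_seq nth_nseq; case: ifP. Qed.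

Lemma W_Del n s : 0 < n -> spiro_wiener n s + 25 * Del s n = spiro_wiener n (para_seq n).
Proof.
move=> n0; rewrite !wiener_V //.
have e : Zc s n + Del s n = Zc (para_seq n) n.
  rewrite /Zc /Del -big_split; apply: eq_bigr => i _ /=.
  rewrite Dc_para -mulnDr subnKC //; by rewrite /Dc; case: (nth _ _ _).
have := V_Z s (para_seq n) n0; lia.
Qed.

Lemma reach_iso (T : finType) (e1 e2 : rel T) (f : T -> T) :
  bijective f -> (forall u v, e1 u v = e2 (f u) (f v)) ->
  forall k u v, reach e1 k u v = reach e2 k (f u) (f v).
Proof.
move=> [g fg gf] He; elim=> [|k IH] u v /=.
  by apply/eqP/eqP => [-> //|]; move/(can_inj fg).
rewrite IH; congr (_ || _); apply/existsP/existsP => [[w /andP [h1 h2]]|[w /andP [h1 h2]]].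
  by exists (f w); rewrite -IH -He h1.
by exists (g w); rewrite IH He !gf h1 h2.
Qed.

Lemma gdist_iso (T : finType) (e1 e2 : rel T) (f : T -> T) :
  bijective f -> (forall u v, e1 u v = e2 (f u) (f v)) ->
  forall u v, gdist e1 u v = gdist e2 (f u) (f v).
Proof. by move=> bf He u v; rewrite /gdist; apply: eq_find => k; apply: reach_iso. Qed.

Lemma double_sum N (g : 'I_N -> 'I_N -> nat) :
  (forall u v : 'I_N, g u v = g v u) -> (forall u : 'I_N, g u u = 0) ->
  \sum_(u : 'I_N) \sum_(v : 'I_N) g u v = 2 * \sum_(u : 'I_N) \sum_(v : 'I_N | u < v) g u v.
Proof.
move=> gs g0.
have e : forall u v, g u v = (if u < v then g u v else 0) + (if v < u then g u v else 0).
  move=> u v; case: (ltngtP u v) => h; rewrite ?addn0 //.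
  have -> : u = v by apply: val_inj.
  by rewrite g0.
under eq_bigr => u _ do under eq_bigr => v _ do rewrite e.
under eq_bigr => u _ do rewrite big_split.
rewrite big_split /= mul2n -addnn; congr (_ + _).
  by apply: eq_bigr => u _; rewrite [RHS]big_mkcond.
rewrite exchange_big; apply: eq_bigr => u _; rewrite [RHS]big_mkcond; apply: eq_bigr => v _.
by rewrite gs.
Qed.

Lemma fd_sym s u v : fd s u v = fd s v u.
Proof.
rewrite /fd /G; case: (ltngtP (home u) (home v)) => h.
- lia.
- lia.
- by rewrite hd_sym.
Qed.

Lemma W_iso n s1 s2 : 0 < n -> graph_iso (spiro_adj n s1) (spiro_adj n s2) ->
  spiro_wiener n s1 = spiro_wiener n s2.
Proof.
move=> n0 [f [bf He]].
have key : forall s, 2 * spiro_wiener n s =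
   \sum_u \sum_v gdist (spiro_adj n s) u v.
  move=> s; rewrite (double_sum (g := gdist (spiro_adj n s))) //.
  - by move=> u v; rewrite !gdist_fd // fd_sym.
  - by move=> u; rewrite gdist_fd // /fd /G ltnn eqxx hdpp.
suff : 2 * spiro_wiener n s1 = 2 * spiro_wiener n s2 by lia.
rewrite !key.
under eq_bigr => u _ do under eq_bigr => v _ do rewrite (gdist_iso bf He).
rewrite [RHS](reindex_inj (bij_inj bf)); apply: eq_bigr => u _.
by rewrite [RHS](reindex_inj (bij_inj bf)).
Qed.

Definition Ar t n k := if k == 0 then 0 else Pk t (n.-1 - k).
Definition sg t n k j := (Ar t n k + 6 - j) %% 6.
Definition Fv t n v := hexpos t (n.-1 - home v) (sg t n (home v) (pos v)).

Lemma Ar_le3 t n k : Ar t n k <= 3.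
Proof. rewrite /Ar; case: ifP => // _; exact: Pk_le3. Qed.

Lemma sg_lt t n k j : sg t n k j < 6.
Proof. exact: ltn_pmod. Qed.

Lemma Pk_rev t n k : size t = n - 2 -> 0 < k -> k <= n - 2 ->
  Pk (rev t) k = Pk t (n.-1 - k).
Proof.
move=> st; case: k => // k _ hk.
have -> : n.-1 - k.+1 = (n - 2 - k.+1).+1 by lia.
rewrite /= nth_rev ?st //; lia.
Qed.

Lemma sg_adj A j : A <= 3 -> j < 6 ->
  (A + 6 - j) %% 6 = ((A + 6 - (j + 1) %% 6) %% 6 + 1) %% 6.
Proof.
by case: A => [|[|[|[|//]]]] _; case: j => [|[|[|[|[|[|//]]]]]].
Qed.

Lemma sg_inv A j : A <= 3 -> j < 6 -> (A + 6 - (A + 6 - j) %% 6) %% 6 = j.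
Proof.
by case: A => [|[|[|[|//]]]] _; case: j => [|[|[|[|[|[|//]]]]]].
Qed.

Lemma E1 t n k j : size t = n - 2 -> 2 <= n -> k < n -> j < 6 ->
  Fv t n (hexpos (rev t) k j) = hexpos t (n.-1 - k) (sg t n k j).
Proof.
move=> st n2 hk hj; case: (boolP ((j != 0) || (k == 0))) => h.
  by rewrite /Fv; case: (hexpos_hp (rev t) hj h) => -> ->.
move: h; rewrite negb_or negbK => /andP [/eqP -> hk0].
case: k hk hk0 => // k hk _.
rewrite hexposS /Fv.
case: (hexpos_hp (rev t) (k := k) (j := Pk (rev t) k)).
- by have := Pk_le3 (rev t) k; lia.
- by case: k {hk} => //= k; have := ctd_bnd (nth Para (rev t) k); case: (ctype_dist _).
move=> -> ->.
have -> : sg t n k.+1 0 = Pk t (n.-1 - k.+1).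
  by rewrite /sg /Ar /= subn0 modnDr modn_small //; have := Pk_le3 t (n.-1 - k.+1); lia.
have -> : n.-1 - k = (n.-1 - k.+1).+1 by lia.
rewrite -hexposS; congr hexpos.
rewrite /sg /Ar; case: (eqVneq k 0) => [->|k0] /=; first by [].
rewrite (Pk_rev st) ?lt0n //; last lia.
have := Pk_le3 t (n.-1 - k).
have -> : n.-1 - k = (n.-1 - k.+1).+1 by lia.
move=> h3; rewrite addnC addnK modnn //.
Qed.

Lemma Fv_lt t n v : 0 < n -> v < 5 * n + 1 -> Fv t n v < 5 * n + 1.
Proof. move=> n0 hv; apply: hexpos_lt; [lia|exact: sg_lt]. Qed.

Definition Fo t n (x : 'I_(5 * n + 1)) : 'I_(5 * n + 1) :=
  if (0 < n) =P true is ReflectT h then Ordinal (Fv_lt t h (ltn_ord x)) else x.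

Arguments Fo t n x : clear implicits.
Lemma FoE t n (x : 'I_(5 * n + 1)) : 0 < n -> (Fo t n x : nat) = Fv t n x.
Proof. by rewrite /Fo => n0; case: eqP => // h; rewrite n0 in h. Qed.

Lemma Fv_hexpos_home t n v : Fv t n v = Fv t n (hexpos (rev t) (home v) (pos v)).
Proof. by rewrite -hexpos_home. Qed.

Lemma E2 t n (x y : 'I_(5 * n + 1)) : size t = n - 2 -> 2 <= n ->
  spiro_adj n (rev t) x y -> spiro_adj n t (Fo t n x) (Fo t n y).
Proof.
move=> st n2 /adjE [k [j [hk [hj H]]]].
have n0 : 0 < n by lia.
have hj1 : (j + 1) %% 6 < 6 by exact: ltn_pmod.
have sa := sg_adj (Ar_le3 t n k) hj.
apply: (adjI (k := n.-1 - k) (j := sg t n k ((j + 1) %% 6))); [lia|exact: sg_lt|].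
rewrite !FoE //.
case: H => [[-> ->]|[-> ->]]; rewrite !E1 //; [right|left]; split => //;
  by rewrite /sg -sa.
Qed.

Lemma Ar_rev t n k : size t = n - 2 -> 2 <= n -> k < n ->
  Ar (rev t) n (n.-1 - k) = Ar t n k.
Proof.
move=> st n2 hk; rewrite /Ar.
case: (eqVneq k 0) => [->|k0].
  have -> : (n.-1 - 0 == 0) = false by apply/eqP; lia.
  by rewrite subn0 subnn.
case: (eqVneq (n.-1 - k) 0) => [e|ne].
  by rewrite e.
have -> : n.-1 - (n.-1 - k) = k by lia.
rewrite (Pk_rev st) // ?lt0n //; lia.
Qed.

Lemma E3 t n v : size t = n - 2 -> 2 <= n -> v < 5 * n + 1 ->
  Fv (rev t) n (Fv t n v) = v.
Proof.
move=> st n2 hv.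
have n0 : 0 < n by lia.
have hk : home v < n by case: (home_lt hv) => //; lia.
have hj : pos v < 6 by have := pos_le5 v; lia.
have st' : size (rev t) = n - 2 by rewrite size_rev.
rewrite [Fv t n v]/Fv.
have := E1 (t := rev t) (k := n.-1 - home v) (j := sg t n (home v) (pos v)) st' n2.
rewrite revK => ->; [|lia|exact: sg_lt].
have -> : n.-1 - (n.-1 - home v) = home v by lia.
rewrite /sg (Ar_rev st) // sg_inv ?Ar_le3 //.
by rewrite -hexpos_home.
Qed.

Lemma rev_iso t n : 2 <= n -> size t = n - 2 ->
  graph_iso (spiro_adj n (rev t)) (spiro_adj n t).
Proof.
move=> n2 st.
have n0 : 0 < n by lia.
have st' : size (rev t) = n - 2 by rewrite size_rev.
have e : forall x, Fo (rev t) n (Fo t n x) = x.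
  move=> x; apply: val_inj => /=; rewrite FoE // FoE // E3 // ltn_ord.
have e' : forall x, Fo t n (Fo (rev t) n x) = x.
  move=> x; apply: val_inj => /=; rewrite FoE // FoE //.
  by rewrite -{1}(revK t) E3 // ltn_ord.
exists (Fo t n); split; first by exists (Fo (rev t) n).
move=> u v; apply/idP/idP; first exact: E2.
have := E2 (t := rev t) (x := Fo t n u) (y := Fo t n v) st' n2.
rewrite revK => H /H.
by rewrite !e.
Qed.

Definition pat m j c : seq ctype := nseq j Para ++ c :: nseq (m - j - 1) Para.

Lemma nth_pat m j c i : nth Para (pat m j c) i = if i == j then c else Para.
Proof.
rewrite /pat nth_cat size_nseq nth_nseq; case: (ltngtP i j) => h //.
- have -> : i - j = (i - j - 1).+1 by lia.
  by rewrite /= nth_nseq; case: ifP.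
- by rewrite h subnn.
Qed.

Lemma size_pat m j c : j < m -> size (pat m j c) = m.
Proof. rewrite /pat size_cat /= !size_nseq; lia. Qed.

Lemma Dc_le3 s i : Dc s i <= 3.
Proof. by rewrite /Dc; case: (nth _ _ _). Qed.

Lemma Dc3 s i : Dc s i = 3 -> nth Para s i = Para.
Proof. by rewrite /Dc; case: (nth _ _ _). Qed.

Lemma Dc2 s i : Dc s i = 2 -> nth Para s i = Meta.
Proof. by rewrite /Dc; case: (nth _ _ _). Qed.

Lemma seq_pat s m j c : size s = m -> j < m -> nth Para s j = c ->
  (forall i, i < m -> i != j -> Dc s i = 3) -> s = pat m j c.
Proof.
move=> ss hj hc H; apply: (eq_from_nth (x0 := Para)); first by rewrite size_pat.
move=> i; rewrite ss => hi; rewrite nth_pat; case: eqP => [->//|/eqP ne].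
exact: Dc3 (H i hi ne).
Qed.

Definition w n i := i.+1 * (n - 2 - i).

Lemma w_ge n i : i < n - 2 -> n - 2 <= w n i.
Proof. rewrite /w => h; nia. Qed.

Lemma DelE s n : Del s n = \sum_(i < n - 2) w n i * (3 - Dc s i).
Proof. by []. Qed.

Lemma Del_one s n j : j < n - 2 -> w n j * (3 - Dc s j) <= Del s n.
Proof.
move=> hj; rewrite DelE (bigD1 (Ordinal hj)) //=; lia.
Qed.

Lemma Del_two s n i j : i < n - 2 -> j < n - 2 -> i != j ->
  w n i * (3 - Dc s i) + w n j * (3 - Dc s j) <= Del s n.
Proof.
move=> hi hj ne; rewrite DelE (bigD1 (Ordinal hi)) //= (bigD1 (Ordinal hj)) //=; first lia.
by apply/eqP => -[e]; rewrite e eqxx in ne.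
Qed.

Lemma Del_single s n j : j < n - 2 ->
  (forall i, i < n - 2 -> i != j -> Dc s i = 3) -> Del s n = w n j * (3 - Dc s j).
Proof.
move=> hj H; rewrite DelE (bigD1 (Ordinal hj)) //= big1 ?addn0 // => i ne.
rewrite H ?subnn ?muln0 //.
Qed.

Lemma Del_pat n j c : j < n - 2 -> Del (pat (n - 2) j c) n = w n j * (3 - ctype_dist c).
Proof.
move=> hj; rewrite (Del_single (j := j)) //.
  by rewrite /Dc nth_pat eqxx.
by move=> i _ ne; rewrite /Dc nth_pat (negbTE ne).
Qed.

Lemma all_para s n : size s = n - 2 -> Del s n = 0 -> s = para_seq n.
Proof.
move=> ss H; apply: (eq_from_nth (x0 := Para)); first by rewrite size_nseq.
move=> i; rewrite ss => hi; rewrite nth_nseq hi.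
have := Del_one s hi; rewrite H; have := w_ge hi.
have := Dc_le3 s i => h1 h2 h3.
apply: Dc3; nia.
Qed.

Lemma exists_dev s n : size s = n - 2 -> s <> para_seq n ->
  exists2 j, j < n - 2 & Dc s j < 3.
Proof.
move=> ss ne.
case: (boolP [exists j : 'I_(n - 2), Dc s j < 3]) => [/existsP [j hj]|H].
  by exists j.
exfalso; apply: ne; apply: all_para => //.
rewrite DelE big1 // => i _.
move: H; rewrite negb_exists => /forallP /(_ i); have := Dc_le3 s i; lia.
Qed.

Lemma one_dev s n j : j < n - 2 -> Dc s j < 3 -> Del s n < 2 * (n - 2) ->
  forall i, i < n - 2 -> i != j -> Dc s i = 3.
Proof.
move=> hj dj hD i hi ne.
have := Del_two s hi hj ne; have := w_ge hi; have := w_ge hj.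
have := Dc_le3 s i; nia.
Qed.

Lemma second_char s n : 4 <= n -> size s = n - 2 -> s <> para_seq n ->
  n - 2 <= Del s n /\
  (Del s n = n - 2 -> s = pat (n - 2) (n - 3) Meta \/ s = pat (n - 2) 0 Meta).
Proof.
move=> n4 ss ne; have [j hj dj] := exists_dev ss ne.
have h1 := Del_one s hj; have h2 := w_ge hj.
split; first nia.
move=> hD.
have od := one_dev hj dj (ltac:(lia)).
have e := Del_single hj od.
have dj2 : Dc s j = 2 by nia.
have wj : w n j = n - 2 by nia.
have hm : j * (n - 3 - j) = 0 by move: wj; rewrite /w; nia.
have hc : nth Para s j = Meta by apply: Dc2.
move: hm => /eqP; rewrite muln_eq0 => /orP [/eqP j0|/eqP j1].
  subst j; right; exact: seq_pat.
left; have -> : n - 3 = j by lia.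
exact: seq_pat.
Qed.

Lemma third_char s n : 5 <= n -> size s = n - 2 -> s <> para_seq n ->
  s <> pat (n - 2) (n - 3) Meta -> s <> pat (n - 2) 0 Meta ->
  2 * (n - 3) <= Del s n /\
  (Del s n = 2 * (n - 3) -> s = pat (n - 2) (n - 4) Meta \/ s = pat (n - 2) 1 Meta).
Proof.
move=> n5 ss ne ne2 ne3; have [j hj dj] := exists_dev ss ne.
have h1 := Del_one s hj; have h2 := w_ge hj.
case: (leqP (2 * (n - 2)) (Del s n)) => hD.
  split; first lia. lia.
have od := one_dev hj dj hD.
have e := Del_single hj od.
have dj2 : Dc s j = 2 by have := Dc_le3 s j; nia.
have hc : nth Para s j = Meta by apply: Dc2.
have j0 : j != 0.
  by apply/eqP => j0; subst j; apply: ne3; apply: seq_pat.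
have j1 : j != n - 3.
  by apply/eqP => j1; subst j; apply: ne2; apply: seq_pat.
have key : w n j = 2 * (n - 3) + (j - 1) * (n - 4 - j).
  rewrite /w; move: j0 j1 hj; clear; move=> j0 j1 hj.
  have [a ea] : exists a, j = a.+1 by exists j.-1; lia.
  have [b eb] : exists b, n = a + b + 5 by exists (n - 5 - a); lia.
  subst j n.
  have -> : a + b + 5 - 2 - a.+1 = b + 2 by lia.
  have -> : a + b + 5 - 3 = a + b + 2 by lia.
  have -> : a.+1 - 1 = a by lia.
  have -> : a + b + 5 - 4 - a.+1 = b by lia.
  nia.
rewrite e dj2 muln1 key; split; first exact: leq_addr.
move=> hD2.
have : (j - 1) * (n - 4 - j) = 0 by move: hD2; rewrite -[RHS]addn0 => /eqP; rewrite eqn_add2l => /eqP.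
move=> /eqP; rewrite muln_eq0 => /orP [/eqP ja|/eqP jb].
  right; have -> : pat (n - 2) 1 Meta = pat (n - 2) j Meta by congr pat; lia.
  exact: seq_pat.
left; have -> : n - 4 = j by lia. exact: seq_pat.
Qed.

Lemma second_pat n : 3 <= n -> second_seq n = pat (n - 2) (n - 3) Meta.
Proof.
move=> n3; rewrite /second_seq /pat -cats1.
by have -> : n - 2 - (n - 3) - 1 = 0 by lia.
Qed.

Lemma rsecond_pat n : 3 <= n -> rev (second_seq n) = pat (n - 2) 0 Meta.
Proof.
move=> n3; rewrite /second_seq rev_rcons rev_nseq /pat /=.
by have -> : n - 2 - 0 - 1 = n - 3 by lia.
Qed.

Lemma third_pat n : 4 <= n -> third_seq n = pat (n - 2) (n - 4) Meta.
Proof.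
move=> n4; rewrite /third_seq /pat.
by have -> : n - 2 - (n - 4) - 1 = 1 by lia.
Qed.

Lemma rthird_pat n : 4 <= n -> rev (third_seq n) = pat (n - 2) 1 Meta.
Proof.
move=> n4; rewrite /third_seq rev_cat rev_nseq /pat /=.
by have -> : n - 2 - 1 - 1 = n - 4 by lia.
Qed.

Lemma iso_refl (T : finType) (e : rel T) : graph_iso e e.
Proof. by exists id; split => //; exists id. Qed.

Theorem theorem2p5 (n : nat) : 4 <= n ->
  let G := spiro_adj n in
  let W := spiro_wiener n in
  (forall s : seq ctype, size s = n - 2 ->
     W s <= W (para_seq n) /\
     (W s = W (para_seq n) -> graph_iso (G s) (G (para_seq n)))) /\
  ~ graph_iso (G (second_seq n)) (G (para_seq n)) /\
  (forall s : seq ctype, size s = n - 2 ->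
     ~ graph_iso (G s) (G (para_seq n)) ->
     W s <= W (second_seq n) /\
     (W s = W (second_seq n) -> graph_iso (G s) (G (second_seq n)))) /\
  (5 <= n ->
  ~ graph_iso (G (third_seq n)) (G (para_seq n)) /\
  ~ graph_iso (G (third_seq n)) (G (second_seq n)) /\
  (forall s : seq ctype, size s = n - 2 ->
     ~ graph_iso (G s) (G (para_seq n)) ->
     ~ graph_iso (G s) (G (second_seq n)) ->
     W s <= W (third_seq n) /\
     (W s = W (third_seq n) -> graph_iso (G s) (G (third_seq n))))).
Proof.
move=> n4 G W; rewrite {}/G {}/W.
have n0 : 0 < n by lia.
have WD := fun s => W_Del s n0.
have sz2 : size (second_seq n) = n - 2 by rewrite second_pat ?size_pat //; lia.
have Dsec : Del (second_seq n) n = n - 2.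
  rewrite second_pat; last lia.
  rewrite Del_pat /=; last lia.
  rewrite /w (_ : n - 2 - (n - 3) = 1); last lia.
  lia.
have Wsec := WD (second_seq n); rewrite Dsec in Wsec.
have iso_ne : forall s, ~ graph_iso (spiro_adj n s) (spiro_adj n (para_seq n)) ->
    s <> para_seq n.
  by move=> s H e; apply: H; rewrite e; apply: iso_refl.
split.
  move=> s ss; have := WD s; split; first lia.
  move=> hW; have D0 : Del s n = 0 by lia.
  by rewrite (all_para ss D0); apply: iso_refl.
split.
  by move=> /(W_iso n0); lia.
split.
  move=> s ss /iso_ne ne.
  have [h1 h2] := second_char n4 ss ne.
  have := WD s; split; first lia.
  move=> hW; have : Del s n = n - 2 by lia.
  move=> /h2 [e|e].
    by rewrite e -second_pat; [apply: iso_refl|lia].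
  by rewrite e -rsecond_pat; [apply: rev_iso|lia]; lia.
move=> n5.
have Dth : Del (third_seq n) n = 2 * (n - 3).
  rewrite third_pat; last lia.
  rewrite Del_pat /=; last lia.
  rewrite /w (_ : n - 2 - (n - 4) = 2); last lia.
  lia.
have Wth := WD (third_seq n); rewrite Dth in Wth.
split.
  by move=> /(W_iso n0); lia.
split.
  by move=> /(W_iso n0); lia.
move=> s ss /iso_ne ne ne2.
have ne2' : s <> pat (n - 2) (n - 3) Meta.
  by move=> e; apply: ne2; rewrite e -second_pat; [apply: iso_refl|lia].
have ne3' : s <> pat (n - 2) 0 Meta.
  move=> e; apply: ne2; rewrite e -rsecond_pat; last lia.
  by apply: rev_iso; lia.
have [h1 h2] := third_char n5 ss ne ne2' ne3'.
have := WD s; split; first lia.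
move=> hW; have : Del s n = 2 * (n - 3) by lia.
move=> /h2 [e|e].
  by rewrite e -third_pat; [apply: iso_refl|lia].
rewrite e -rthird_pat; last lia.
apply: rev_iso; first lia.
by rewrite /third_seq size_cat size_nseq /=; lia.
Qed.
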